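(* Let $G$ be a non-complete double-critical $7$-chromatic graph with a vertex $x$ of degree $9$. Then: (a) the vertices of any maximum independent set $W=\{w_1,w_2,w_3\}$ of $G_x$ all have degree $5$ in $G_x$; (b) every vertex of $G_x$ has degree $5$, $6$ or $8$ in $G_x$; (c) for such $W$, every $w_i$ ($i=1,2,3$) has exactly one private non-neighbour with respect to $W$ in $G_x$, i.e. there exist three distinct vertices $y_1,y_2,y_3\in V(G_x)\setminus W$ such that each $w_i$ is adjacent to every vertex of $V(G_x)\setminus(W\cup\{y_i\})$ and not adjacent to $y_i$; (d) with $Z:=V(G_x)\setminus(W\cup\{y_1,y_2,y_3\})$, each $y_i$ has both a neighbour and a non-neighbour in $Z$.
   Context: All graphs are finite and simple. A graph $G$ is (vertex-)critical if $\chi(G-v)<\chi(G)$ for every vertex $v\in V(G)$. A critical graph $G$ is double-critical if $\chi(G-x-y)\le\chi(G)-2$ for every edge $xy\in E(G)$. For a vertex $x$, $G_x:=G[N(x)]$ denotes the subgraph induced by the neighbourhood of $x$. *)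

(* Defs.v *)
(* A finite simple graph is a symmetric irreflexive
   relation e on a finType T (the irreflexivity/symmetry hypotheses are
   binders of the main theorem). Induced subgraphs are given by vertex sets. *)
From mathcomp Require Import all_boot.
Set Implicit Arguments. Unset Strict Implicit. Unset Printing Implicit Defensive.

Section Graph.
Variables (T : finType) (e : rel T).

(* The induced subgraph G[S] has a proper colouring using colours 0..k-1.
   (Colours outside S are irrelevant; the test x != y only matters for
   loops, which simple graphs do not have.) *)
Definition colorableb (S : {set T}) (k : nat) : bool :=
  [exists f : {ffun T -> 'I_k.+1},
     [forall x in S, (f x < k) &&
        [forall y in S, ((x != y) && e x y) ==> (f x != f y)]]].

Lemma colorable_ex (S : {set T}) : exists k, colorableb S k.
Proof.
exists #|T|; apply/existsP; exists [ffun x => inord (enum_rank x)].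
apply/forallP => x; apply/implyP => _; rewrite !ffunE.
have Hx : (enum_rank x < #|T|.+1)%N by apply: leqW; exact: ltn_ord.
rewrite inordK // ltn_ord /=.
apply/forallP => y; apply/implyP => _; apply/implyP => /andP [nxy _]; rewrite ffunE.
have Hy : (enum_rank y < #|T|.+1)%N by apply: leqW; exact: ltn_ord.
apply/negP => /eqP /(congr1 val); rewrite /= !inordK // => /val_inj /enum_rank_inj Exy.
by rewrite Exy eqxx in nxy.
Qed.

Definition chi (S : {set T}) : nat := ex_minn (colorable_ex S).

Definition chiG : nat := chi setT.

Definition critical : Prop := forall v : T, chi (setT :\ v) < chiG.

Definition double_critical : Prop :=
  critical /\ forall x y : T, e x y -> chi ((setT :\ x) :\ y) <= chiG - 2.

Definition complete : Prop := forall x y : T, x != y -> e x y.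

(* neighbourhood N(x); G_x = G[N(x)] *)
Definition nbhd (x : T) : {set T} := [set y | e x y].

Definition deg (x : T) : nat := #|nbhd x|.

Definition deg_in (S : {set T}) (v : T) : nat := #|S :&: nbhd v|.

Definition independent_in (S W : {set T}) : bool :=
  (W \subset S) && [forall u in W, forall v in W, ~~ e u v].

Definition max_independent_in (S W : {set T}) : Prop :=
  independent_in S W /\
  forall W' : {set T}, independent_in S W' -> #|W'| <= #|W|.

End Graph.

(* Main.v *)
Require Import Defs.
From mathcomp Require Import all_boot zify.
Set Implicit Arguments. Unset Strict Implicit. Unset Printing Implicit Defensive.

Lemma chi_col (T : finType) (e : rel T) S : colorableb e S (chi e S).
Proof. rewrite /chi; by case: ex_minnP. Qed.

Lemma chi_min (T : finType) (e : rel T) S k : colorableb e S k -> chi e S <= k.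
Proof. rewrite /chi => h; case: ex_minnP => m _ /(_ _ h); done. Qed.

Lemma col_mono (T : finType) (e : rel T) S k k' : k <= k' -> colorableb e S k -> colorableb e S k'.
Proof.
move=> kk /existsP [f /forallP Hf]; apply/existsP.
have le : k.+1 <= k'.+1 by [].
exists [ffun z => widen_ord le (f z)]; apply/forallP => z; apply/implyP => zS.
move: (Hf z); rewrite zS /= ffunE /= => /andP [fz Hz]; rewrite (leq_trans fz kk) /=.
apply/forallP => y; apply/implyP => yS; rewrite ffunE /=.
by move/forallP: Hz => /(_ y); rewrite yS.
Qed.

Goal forall d : nat, 5 <= d -> d <= 8 -> d != 7 -> d \in [:: 5; 6; 8].
move=> d *; rewrite !inE. lia. Qed.

Lemma key (T : finType) (e : rel T) (e_sym : symmetric e) (e_irr : irreflexive e)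
  (Hdc : double_critical e) (H7 : chiG e = 7) x u (hxu : e x u) :
  exists f : {ffun T -> 'I_6},
    [/\ (forall z, z != x -> z != u -> f z < 5),
        (forall z y, z != x -> z != u -> y != x -> y != u -> e z y -> f z != f y)
      & (forall c, c < 5 -> exists t, [&& e x t, e u t & (f t == c :> nat)])].
Proof.
have hc : chi e ((setT :\ x) :\ u) <= 5 by case: Hdc => _ /(_ _ _ hxu); rewrite H7.
have /existsP [f /forallP Hf] := col_mono hc (chi_col e ((setT :\ x) :\ u)).
have fS : forall z, z != x -> z != u -> (f z < 5) &&
     [forall y in (setT :\ x) :\ u, ((z != y) && e z y) ==> (f z != f y)].
  by move=> z zx zu; move: (Hf z); rewrite !inE zx zu.
exists f; split.
- by move=> z zx zu; case/andP: (fS z zx zu).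
- move=> z y zx zu yx yu ezy.
  have zy : z != y by apply/negP => /eqP zy; rewrite zy e_irr in ezy.
  case/andP: (fS z zx zu) => _ /forallP /(_ y).
  by rewrite !inE yx yu ezy zy /=.
move=> c hc5.
case: (boolP [exists t, [&& e x t, e u t & (f t == c :> nat)]]) => [/existsP //|].
rewrite negb_exists => /forallP Hno.
have : chi e setT <= 6.
  apply: chi_min; apply/existsP.
  pose gn z := if z == x then c else if z == u then 5
               else if e x z && (f z == c :> nat) then 5 else nat_of_ord (f z).
  have gn6 : forall z, gn z < 6.
    move=> z; rewrite /gn; case: ifP => // _; first by lia.
    case: ifP => // _; case: ifP => // _; exact: ltn_ord.
  have gn7 : forall z, gn z < 7 by move=> z; exact: leqW (gn6 z).
  exists [ffun z => inord (gn z)]; apply/forallP => z; apply/implyP => _.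
  rewrite ffunE inordK ?gn7 // gn6 /=.
  apply/forallP => y; apply/implyP => _; apply/implyP => /andP [zy ezy].
  rewrite ffunE; apply/negP => /eqP /(congr1 val); rewrite /= !inordK ?gn7 //.
  have fproper : forall a b, a != x -> a != u -> b != x -> b != u -> e a b -> (f a : nat) != f b.
    move=> a b ax au bx bu eab; case/andP: (fS a ax au) => _ /forallP /(_ b).
    rewrite !inE bx bu eab andbT /=. move=> /implyP h.
    have ab : a != b by apply/negP => /eqP ab; rewrite ab e_irr in eab.
    by apply: h; rewrite ab.
  have f5 : forall a, a != x -> a != u -> f a < 5 by move=> a ax au; case/andP: (fS a ax au).
  have nomix : forall a, e x a -> e u a -> (f a == c :> nat) = false.
    move=> a h1 h2; move: (Hno a); by rewrite h1 h2 /= => /negbTE.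
  rewrite /gn.
  case: (eqVneq z x) => [zxe | zx]; case: (eqVneq y x) => [yx | yx].
  + by rewrite zxe yx eqxx in zy.
  + subst z; case: (eqVneq y u) => [yu | yu]; first by lia.
    have exy : e x y by [].
    rewrite exy /=; case: ifP => [_|]; first by lia.
    by move=> /negbT /eqP; lia.
  + case: (eqVneq z u) => [_|zu]; first by lia.
    have exz : e x z by rewrite e_sym -yx.
    rewrite exz /=; case: ifP => [_|]; first by lia.
    by move=> /negbT /eqP; lia.
  + case: (eqVneq z u) => [zu | zu]; case: (eqVneq y u) => [yu | yu].
    * by rewrite zu yu eqxx in zy.
    * case: ifP => [/andP [exy fy]|_]; last by have := f5 y yx yu; lia.
      have euy : e u y by rewrite -zu.
      by rewrite nomix in fy.
    * case: ifP => [/andP [exz fz]|_]; last by have := f5 z zx zu; lia.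
      have euz : e u z by rewrite -yu e_sym.
      by rewrite nomix in fz.
    * have := fproper z y zx zu yx yu ezy; have := f5 z zx zu; have := f5 y yx yu.
      case: ifP => [/andP [_ /eqP h1]|_]; case: ifP => [/andP [_ /eqP h2]|_]; lia.
rewrite -/(chiG e) H7 //.
Qed.

Lemma pairP (T : finType) (e : rel T) (e_sym : symmetric e) (e_irr : irreflexive e)
  (Hdc : double_critical e) (H7 : chiG e = 7) x u v :
  e x u -> e x v -> ~~ e u v -> v != u -> exists t, [&& e x t, e u t & ~~ e v t].
Proof.
move=> exu exv nuv vu.
have [f [f5 fpr fall]] := key e_sym e_irr Hdc H7 exu.
have vx : v != x by apply/negP => /eqP vx; rewrite vx e_irr in exv.
have [t /and3P [ext eut /eqP ft]] := fall _ (f5 v vx vu).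
exists t; rewrite ext eut /=; apply/negP => evt.
have tx : t != x by apply/negP => /eqP tx; rewrite tx e_irr in ext.
have tu : t != u by apply/negP => /eqP tu; rewrite tu e_irr in eut.
by move: (fpr v t vx vu tx tu evt) => /eqP []; apply: val_inj; rewrite /= ft.
Qed.

Lemma deg5 (T : finType) (e : rel T) (e_sym : symmetric e) (e_irr : irreflexive e)
  (Hdc : double_critical e) (H7 : chiG e = 7) x u :
  e x u -> 5 <= deg_in e (nbhd e x) u.
Proof.
move=> exu.
have [f [f5 fpr fall]] := key e_sym e_irr Hdc H7 exu.
have ex : forall c : 'I_5, exists t, [&& e x t, e u t & (f t == c :> nat)].
  by move=> c; apply: fall; exact: ltn_ord.
pose g c := xchoose (ex c).
have gP : forall c, [&& e x (g c), e u (g c) & (f (g c) == c :> nat)] by move=> c; exact: (xchooseP (ex c)).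
have ginj : injective g.
  move=> c1 c2 h; apply: val_inj.
  have /and3P [_ _ /eqP h1] := gP c1; have /and3P [_ _ /eqP h2] := gP c2.
  have E : (c2 : nat) = c1 by rewrite -h2 -h h1.
  exact: (esym E).
rewrite /deg_in -{1}(card_ord 5) -(card_imset _ ginj).
apply: subset_leq_card; apply/subsetP => t /imsetP [c _ ->].
by have /and3P [h1 h2 _] := gP c; rewrite !inE h1 h2.
Qed.

Definition Cn (T : finType) (e : rel T) x v := [set t in nbhd e x | (t != v) && ~~ e v t].

Lemma cardCn (T : finType) (e : rel T) (e_irr : irreflexive e) x v :
  deg e x = 9 -> e x v -> #|Cn e x v| + deg_in e (nbhd e x) v = 8.
Proof.
move=> Hx exv.
have h : #|nbhd e x :\ v| = 8 by rewrite /deg (cardsD1 v) inE exv in Hx; case: Hx.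
have E1 : (nbhd e x :\ v) :&: nbhd e v = nbhd e x :&: nbhd e v.
  apply/setP => t; rewrite !inE; case: (eqVneq t v) => [->|] //=.
  by rewrite e_irr andbF.
have E2 : (nbhd e x :\ v) :\: nbhd e v = Cn e x v.
  apply/setP => t; rewrite /Cn !inE; by case: (t != v); case: (e x t); case: (e v t).
by rewrite -h -(cardsID (nbhd e v) (nbhd e x :\ v)) E1 E2 addnC.
Qed.

Lemma Cn_le3 (T : finType) (e : rel T) (e_sym : symmetric e) (e_irr : irreflexive e)
  (Hdc : double_critical e) (H7 : chiG e = 7) x v :
  deg e x = 9 -> e x v -> #|Cn e x v| <= 3.
Proof.
move=> Hx exv; have := cardCn e_irr Hx exv; have := deg5 e_sym e_irr Hdc H7 exv; lia.
Qed.

Lemma partb (T : finType) (e : rel T) (e_sym : symmetric e) (e_irr : irreflexive e)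
  (Hdc : double_critical e) (H7 : chiG e = 7) x v :
  deg e x = 9 -> e x v -> deg_in e (nbhd e x) v \in [:: 5; 6; 8].
Proof.
move=> Hx exv; have h8 := cardCn e_irr Hx exv; have h5 := deg5 e_sym e_irr Hdc H7 exv.
have n7 : deg_in e (nbhd e x) v != 7.
  apply/negP => /eqP h7; rewrite h7 in h8.
  have /cards1P [u Eu] : #|Cn e x v| == 1 by apply/eqP; lia.
  have : u \in Cn e x v by rewrite Eu set11.
  rewrite /Cn !inE => /and3P [exu uv nvu].
  have nuv : ~~ e u v by rewrite e_sym.
  have vu : v != u by rewrite eq_sym.
  have [t /and3P [ext eut nvt]] := pairP e_sym e_irr Hdc H7 exu exv nuv vu.
  have tv : t != v by apply/negP => /eqP tv; move: nuv; rewrite -tv eut.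
  have : t \in Cn e x v by rewrite /Cn !inE ext tv nvt.
  by rewrite Eu inE => /eqP tu; rewrite tu e_irr in eut.
rewrite !inE; move: n7 h8 h5; lia.
Qed.

Lemma tri (T : finType) (e : rel T) (e_sym : symmetric e) (e_irr : irreflexive e)
  (Hdc : double_critical e) (H7 : chiG e = 7) x a b c :
  deg e x = 9 -> e x a -> e x b -> e x c -> a != b -> a != c -> b != c ->
  ~~ e a b -> ~~ e a c -> ~~ e b c ->
  exists y, [/\ e x y, ~~ e a y, [&& y != a, y != b & y != c],
    forall z, e x z -> z != a -> ~~ e a z -> [|| z == b, z == c | z == y]
    & deg_in e (nbhd e x) a = 5].
Proof.
move=> Hx exa exb exc ab ac bc nab nac nbc.
have nba : ~~ e b a by rewrite e_sym.
have [y /and3P [exy eby nay]] := pairP e_sym e_irr Hdc H7 exb exa nba ab.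
have ya : y != a by apply/negP => /eqP ya; move: nba; rewrite -ya eby.
have yb : y != b by apply/negP => /eqP yb; move: eby; rewrite yb e_irr.
have yc : y != c by apply/negP => /eqP yc; move: nbc; rewrite -yc eby.
have sub : [set b; c; y] \subset Cn e x a.
  apply/subsetP => t; rewrite !inE -orbA => /or3P [] /eqP -> ; rewrite ?exb ?exc ?exy /=.
  - by rewrite eq_sym ab nab.
  - by rewrite eq_sym ac nac.
  - by rewrite ya nay.
have c3 : #|[set b; c; y]| = 3.
  by rewrite setUC !cardsU1 cards1 !inE bc (negbTE yb) (negbTE yc).
have le3 := Cn_le3 e_sym e_irr Hdc H7 Hx exa.
have /eqP E : [set b; c; y] == Cn e x a by rewrite eqEcard sub c3 le3.
exists y; split => //; first by rewrite ya yb yc.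
  move=> z exz za naz.
  have : z \in Cn e x a by rewrite /Cn !inE exz za naz.
  by rewrite -E !inE -orbA.
have h := cardCn e_irr Hx exa; have h3 : #|Cn e x a| = 3 by rewrite -E. 
apply/eqP; by rewrite -(eqn_add2l 3) -{1}h3 h.
Qed.

Lemma arith1 n1 n2 n3 : 9 <= n1 -> n1 <= n2 + n3 -> n3 <= 6 -> 3 <= n2.
Proof. lia. Qed.
Lemma arith2 n m b : 3 <= n -> b + n <= m -> b = true -> m <= 3 -> False.
Proof. lia. Qed.

Definition charv (T : finType) (e : rel T) x p q r yp :=
  [/\ e x yp, ~~ e p yp, [&& yp != p, yp != q & yp != r] &
    forall z, e x z -> z != p -> ~~ e p z -> [|| z == q, z == r | z == yp]].

Lemma partd (T : finType) (e : rel T) (e_sym : symmetric e) (e_irr : irreflexive e)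
  (Hdc : double_critical e) (H7 : chiG e = 7) x a b c ya yb yc (Z : {set T}) :
  deg e x = 9 -> e x a -> e x b -> e x c -> a != b -> a != c -> b != c ->
  ~~ e a b -> ~~ e a c -> ~~ e b c ->
  charv e x a b c ya -> charv e x b a c yb -> charv e x c a b yc ->
  ya != yb -> ya != yc -> yb != yc ->
  (forall z, (z \in Z) = [&& e x z, z != a, z != b, z != c, z != ya, z != yb & z != yc]) ->
  (exists2 z, z \in Z & e ya z) /\ (exists2 z, z \in Z & ~~ e ya z).
Proof.
move=> Hx exa exb exc ab ac bc nab nac nbc [exya naya /and3P [yaa yab yac] cha]
  [exyb nbyb /and3P [ybb yba ybc] chb] [exyc ncyc /and3P [ycc yca ycb] chc] yayb yayc ybyc HZ.
have Z3 : 3 <= #|Z|.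
  pose s := [:: a; b; c; ya; yb; yc].
  have sub : nbhd e x \subset Z :|: [set z in s].
    apply/subsetP => t; rewrite !inE HZ => ->.
    by case: (t == a); case: (t == b); case: (t == c); case: (t == ya); case: (t == yb); case: (t == yc).
  have h1 := subset_leq_card sub; have h2 := (leq_card_setU Z [set z in s]).1.
  have h3 : #|[set z in s]| <= 6 by rewrite cardsE; exact: card_size.
  have h9 : #|nbhd e x| = 9 by [].
  rewrite h9 in h1; exact: arith1 h1 h2 h3.
split.
  case: (boolP [exists z in Z, e ya z]) => [/existsP [z /andP [zZ ez]]|]; first by exists z.
  rewrite negb_exists => /forallP Hno.
  have sub : a |: Z \subset Cn e x ya.
    apply/subsetP => t; rewrite !inE => /orP [/eqP ->|tZ].
      by rewrite exa eq_sym yaa e_sym naya.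
    have := Hno t; rewrite tZ /= => ->; move: tZ; rewrite HZ => /and4P [-> _ _ /and3P [_ -> _]].
    done.
  have := subset_leq_card sub; rewrite cardsU1 HZ eqxx /= andbF /= => h.
  by case: (arith2 Z3 h erefl (Cn_le3 e_sym e_irr Hdc H7 Hx exya)).
have [f [f5 fpr fall]] := key e_sym e_irr Hdc H7 exa.
have neqx : forall v, e x v -> v != x by move=> v exv; apply/negP => /eqP vx; move: exv; rewrite vx e_irr.
have neqa : forall v, e a v -> v != a by move=> v eav; apply/negP => /eqP va; move: eav; rewrite va e_irr.
have ba : b != a by rewrite eq_sym.
have ca : c != a by rewrite eq_sym.
have mate : forall v, v != x -> v != a ->
    exists t, [/\ e x t, e a t & f t = f v].
  move=> v vx va; have [t /and3P [h1 h2 /eqP h3]] := fall _ (f5 v vx va).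
  by exists t; split => //; apply: val_inj.
have fp : forall z y, e x z -> e x y -> z != a -> y != a -> e z y -> f z != f y.
  by move=> z y exz exy za yo ezy; apply: fpr => //; apply: neqx.
have mb : f yb = f b.
  have [t [ext eat ft]] := mate b (neqx _ exb) ba.
  have tb : t != b by apply/negP => /eqP tb; move: nab; rewrite -tb eat.
  have nbt : ~~ e b t.
    by apply/negP => ebt; move: (fp b t exb ext ba (neqa _ eat) ebt); rewrite ft eqxx.
  have := chb t ext tb nbt; case/or3P => /eqP tE.
  - by move: eat; rewrite tE e_irr.
  - by move: nac; rewrite -tE eat.
  - by rewrite -tE.
have mc : f yc = f c.
  have [t [ext eat ft]] := mate c (neqx _ exc) ca.
  have tc : t != c by apply/negP => /eqP tc; move: nac; rewrite -tc eat.
  have nct : ~~ e c t.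
    by apply/negP => ect; move: (fp c t exc ext ca (neqa _ eat) ect); rewrite ft eqxx.
  have := chc t ext tc nct; case/or3P => /eqP tE.
  - by move: eat; rewrite tE e_irr.
  - by move: nab; rewrite -tE eat.
  - by rewrite -tE.
have ebya : e b ya.
  apply/negPn/negP => h; have := chb ya exya yab h.
  by rewrite (negbTE yaa) (negbTE yac) (negbTE yayb).
have ecya : e c ya.
  apply/negPn/negP => h; have := chc ya exya yac h.
  by rewrite (negbTE yaa) (negbTE yab) (negbTE yayc).
have [t [ext eat ft]] := mate ya (neqx _ exya) yaa.
have tya : t != ya by apply/negP => /eqP tE; move: naya; rewrite -tE eat.
have nyat : ~~ e ya t.
  by apply/negP => h; move: (fp ya t exya ext yaa (neqa _ eat) h); rewrite ft eqxx.
exists t => //; rewrite HZ ext (neqa _ eat) tya /=.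
have -> : t != b by apply/negP => /eqP tE; move: nab; rewrite -tE eat.
have -> : t != c by apply/negP => /eqP tE; move: nac; rewrite -tE eat.
have -> : t != yb.
  by apply/negP => /eqP tE; move: (fp b ya exb exya ba yaa ebya); rewrite -ft tE mb eqxx.
apply/negP => /eqP tE; move: (fp c ya exc exya ca yaa ecya); rewrite -ft tE mc eqxx.
done.
Qed.

Theorem proposition28 (T : finType) (e : rel T)
  (e_sym : symmetric e) (e_irr : irreflexive e)
  (Hdc : double_critical e) (Hnc : ~ complete e) (H7 : chiG e = 7)
  (x : T) (Hx : deg e x = 9) :
  (* (b) every vertex of G_x has degree 5, 6 or 8 in G_x *)
  (forall v, v \in nbhd e x ->
     deg_in e (nbhd e x) v \in [:: 5; 6; 8]) /\
  (forall w1 w2 w3 : T,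
     w1 != w2 -> w1 != w3 -> w2 != w3 ->
     max_independent_in e (nbhd e x) [set w1; w2; w3] ->
     let W := [set w1; w2; w3] in
     (* (a) *)
     [/\ deg_in e (nbhd e x) w1 = 5, deg_in e (nbhd e x) w2 = 5
       & deg_in e (nbhd e x) w3 = 5] /\
     (* (c) and (d) *)
     exists y1 y2 y3 : T,
       [/\ y1 != y2, y1 != y3 & y2 != y3] /\
       [/\ y1 \in nbhd e x :\: W, y2 \in nbhd e x :\: W
         & y3 \in nbhd e x :\: W] /\
       [/\ ~~ e w1 y1, ~~ e w2 y2 & ~~ e w3 y3] /\
       [/\ forall z, z \in nbhd e x :\: (y1 |: W) -> e w1 z,
           forall z, z \in nbhd e x :\: (y2 |: W) -> e w2 z
         & forall z, z \in nbhd e x :\: (y3 |: W) -> e w3 z] /\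
       let Z := nbhd e x :\: (W :|: [set y1; y2; y3]) in
       [/\ (exists2 z, z \in Z & e y1 z) /\ (exists2 z, z \in Z & ~~ e y1 z),
           (exists2 z, z \in Z & e y2 z) /\ (exists2 z, z \in Z & ~~ e y2 z)
         & (exists2 z, z \in Z & e y3 z) /\ (exists2 z, z \in Z & ~~ e y3 z)]).
Proof.
split.
  by move=> v; rewrite inE => exv; exact: partb.
move=> w1 w2 w3 n12 n13 n23 [/andP [sub /forallP ind] _] W.
have inW : forall w, w \in [set w1; w2; w3] -> e x w.
  by move=> w /(subsetP sub); rewrite inE.
have nadj : forall u v, u \in [set w1; w2; w3] -> v \in [set w1; w2; w3] -> ~~ e u v.
  move=> u v uW vW; move: (ind u); rewrite uW /= => /forallP /(_ v).
  by rewrite vW.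
have m1 : w1 \in [set w1; w2; w3] by rewrite !inE eqxx.
have m2 : w2 \in [set w1; w2; w3] by rewrite !inE eqxx !orbT.
have m3 : w3 \in [set w1; w2; w3] by rewrite !inE eqxx !orbT.
have ex1 := inW _ m1; have ex2 := inW _ m2; have ex3 := inW _ m3.
have e12 := nadj _ _ m1 m2; have e13 := nadj _ _ m1 m3; have e23 := nadj _ _ m2 m3.
have e21 := nadj _ _ m2 m1; have e31 := nadj _ _ m3 m1; have e32 := nadj _ _ m3 m2.
have n21 : w2 != w1 by rewrite eq_sym.
have n31 : w3 != w1 by rewrite eq_sym.
have n32 : w3 != w2 by rewrite eq_sym.
have [y1 [exy1 n1 d1 ch1 deg1]] := tri e_sym e_irr Hdc H7 Hx ex1 ex2 ex3 n12 n13 n23 e12 e13 e23.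
have [y2 [exy2 n2 d2 ch2 deg2]] := tri e_sym e_irr Hdc H7 Hx ex2 ex1 ex3 n21 n23 n13 e21 e23 e13.
have [y3 [exy3 n3 d3 ch3 deg3]] := tri e_sym e_irr Hdc H7 Hx ex3 ex1 ex2 n31 n32 n12 e31 e32 e12.
have C1 : charv e x w1 w2 w3 y1 by rewrite /charv; split.
have C2 : charv e x w2 w1 w3 y2 by rewrite /charv; split.
have C3 : charv e x w3 w1 w2 y3 by rewrite /charv; split.
have ydist : forall a b c ya yb, e x a -> e x b -> ~~ e a b -> ~~ e a c -> b != a ->
    charv e x a b c ya -> charv e x b a c yb -> ya != yb.
  move=> a b c ya yb exa exb nab nac ba [_ naya _ _] [_ _ _ chb].
  apply/negP => /eqP E.
  have [t /and3P [ext eat nbt]] := pairP e_sym e_irr Hdc H7 exa exb nab ba.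
  have tb : t != b by apply/negP => /eqP tb; move: nab; rewrite -tb eat.
  case/or3P: (chb t ext tb nbt) => /eqP tE.
  - by move: eat; rewrite tE e_irr.
  - by move: nac; rewrite -tE eat.
  - by move: naya; rewrite E -tE eat.
have swap : forall p q r y, charv e x p q r y -> charv e x p r q y.
  move=> p q r y [h1 h2 /and3P [a1 a2 a3] h4]; split => //; first by rewrite a1 a2 a3.
  move=> z exz zp npz; case/or3P: (h4 z exz zp npz) => ->; by rewrite ?orbT.
have y12 : y1 != y2 by apply: (ydist w1 w2 w3).
have y13 : y1 != y3 by apply: (ydist w1 w3 w2) => //; apply: swap.
have y23 : y2 != y3 by apply: (ydist w2 w3 w1) => //; apply: swap.
split; first by [].
exists y1, y2, y3.
case/and3P: d1 => y1w1 y1w2 y1w3; case/and3P: d2 => y2w2 y2w1 y2w3;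
  case/and3P: d3 => y3w3 y3w1 y3w2.
split; first by [].
split.
  by rewrite /W !inE exy1 exy2 exy3 (negbTE y1w1) (negbTE y1w2) (negbTE y1w3) (negbTE y2w1) (negbTE y2w2) (negbTE y2w3) (negbTE y3w1) (negbTE y3w2) (negbTE y3w3).
split; first by [].
have priv : forall a b c ya, charv e x a b c ya -> forall z,
    z \in nbhd e x :\: (ya |: [set a; b; c]) -> e a z.
  move=> a b c ya [_ _ _ cha] z; rewrite !inE => /andP [H exz].
  apply/negPn/negP => naz.
  have za : z != a by move: H; case: (z == a); rewrite ?orbT.
  move: H; case/or3P: (cha z exz za naz) => /eqP ->; rewrite eqxx ?orbT //.
split.
  split.
  - exact: (priv _ _ _ _ C1).
  - move=> z hz; apply: (priv _ _ _ _ C2); move: hz; rewrite !inE.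
    by case: (z == w1); case: (z == w2).
  - move=> z hz; apply: (priv _ _ _ _ C3); move: hz; rewrite !inE.
    by case: (z == w1); case: (z == w2); case: (z == w3).
move=> Z.
have HZ : forall a b c ya yb yc, [:: a; b; c] =i [:: w1; w2; w3] ->
   [:: ya; yb; yc] =i [:: y1; y2; y3] ->
   forall z, (z \in Z) = [&& e x z, z != a, z != b, z != c, z != ya, z != yb & z != yc].
  move=> a b c ya yb yc p1 p2 z.
  rewrite /Z /W !inE.
  have -> : (z == w1) || (z == w2) || (z == w3) = (z \in [:: a; b; c]).
    by rewrite p1 !inE orbA.
  have -> : (z == y1) || (z == y2) || (z == y3) = (z \in [:: ya; yb; yc]).
    by rewrite p2 !inE orbA.
  rewrite !inE.
  by case: (e x z); case: (z == a); case: (z == b); case: (z == c); case: (z == ya); case: (z == yb); case: (z == yc).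
have Pw : forall a b c, (forall z, [|| z == a, z == b | z == c] = [|| z == w1, z == w2 | z == w3]) ->
   [:: a; b; c] =i [:: w1; w2; w3] by move=> a b c h z; rewrite !inE h.
have Py : forall a b c, (forall z, [|| z == a, z == b | z == c] = [|| z == y1, z == y2 | z == y3]) ->
   [:: a; b; c] =i [:: y1; y2; y3] by move=> a b c h z; rewrite !inE h.
split.
- apply: (partd e_sym e_irr Hdc H7 Hx ex1 ex2 ex3 n12 n13 n23 e12 e13 e23 C1 C2 C3 y12 y13 y23).
  by apply: HZ.
- apply: (partd e_sym e_irr Hdc H7 Hx ex2 ex1 ex3 n21 n23 n13 e21 e23 e13 C2 C1 (swap _ _ _ _ C3) _ y23 y13).
  + by rewrite eq_sym.
  + apply: HZ; [apply: Pw | apply: Py] => z; by case: (z == w1); case: (z == w2); case: (z == y1); case: (z == y2).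
- apply: (partd e_sym e_irr Hdc H7 Hx ex3 ex1 ex2 n31 n32 n12 e31 e32 e12 C3 (swap _ _ _ _ C1) (swap _ _ _ _ C2) _ _ y12).
  + by rewrite eq_sym.
  + by rewrite eq_sym.
  + apply: HZ; [apply: Pw | apply: Py] => z; by case: (z == w1); case: (z == w2); case: (z == w3); case: (z == y1); case: (z == y2); case: (z == y3).
Qed.
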